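(* Fix a number $x$ (real or complex) and let $(u_n)_{n\ge0}$ satisfy $(n+\tfrac12)u_{n+1}=2xn\,u_n-(n-\tfrac12)u_{n-1}$ for all $n\ge1$. (a) If $\hat u_n=\dfrac{x u_n-u_{n-1}}{2n+1}$ for $n\ge1$, then $(n+\tfrac32)\hat u_{n+1}=2xn\,\hat u_n-(n-\tfrac32)\hat u_{n-1}$ for all $n\ge2$. (b) The same conclusion holds for $\hat u_n=\dfrac{x u_n-u_{n+1}}{2n-1}$, $n\ge0$. *)

(* Defs.v *)
(* The scalar field is an arbitrary numFieldType R,
   which covers both the real case (e.g. R : realType) and the complex
   case (e.g. complex R, algC). *)
From mathcomp Require Import all_boot all_order all_algebra.
Set Implicit Arguments. Unset Strict Implicit. Unset Printing Implicit Defensive.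
Import Order.TTheory GRing.Theory Num.Theory.
Local Open Scope ring_scope.

Definition rec_at (R : numFieldType) (a x : R) (v : nat -> R) (n : nat) : Prop :=
  (n%:R + a) * v n.+1 = 2 * x * n%:R * v n - (n%:R - a) * v n.-1.

Definition uhat_a (R : numFieldType) (x : R) (u : nat -> R) (n : nat) : R :=
  (x * u n - u n.-1) / (2 * n%:R + 1).

Definition uhat_b (R : numFieldType) (x : R) (u : nat -> R) (n : nat) : R :=
  (x * u n - u n.+1) / (2 * n%:R - 1).

(* Main.v *)
Require Import Defs.
From mathcomp Require Import all_boot all_order all_algebra.
From mathcomp Require Import ring.
Import Order.TTheory GRing.Theory Num.Theory.
Local Open Scope ring_scope.

Lemma posc (R : numFieldType) (t : R) (c : R) : 0 <= t -> 0 < c -> t + c != 0.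
Proof. move=> ht hc; rewrite gt_eqF //; exact: ltr_wpDl. Qed.

Lemma nz (R : numFieldType) (n : nat) (e : R) : e = n.+1%:R -> e != 0.
Proof. by move=> ->; rewrite pnatr_eq0. Qed.

Lemma hal (R : numFieldType) : 0 < (2^-1 : R).
Proof. by rewrite invr_gt0 ltr0n. Qed.

Theorem mainTheorem3 (R : numFieldType) (x : R) (u : nat -> R) :
  (forall n : nat, (1 <= n)%N -> rec_at (2^-1) x u n) ->
  (forall n : nat, (2 <= n)%N -> rec_at (3 / 2) x (uhat_a x u) n) /\
  (forall n : nat, (2 <= n)%N -> rec_at (3 / 2) x (uhat_b x u) n).
Proof.
move=> H; split => -[|[|k]] // _.
- have H1 := H k.+2 isT; have H0 := H k.+1 isT.
  rewrite /rec_at /= in H1 H0 *. rewrite /uhat_a /=.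
  rewrite -!(natr1 k.+1) -!(natr1 k) in H1 H0 *.
  set t := k%:R in H1 H0 *.
  have t0 : 0 <= t := ler0n _ _.
  have e1 : u k.+3 = (2 * x * (t+1+1) * u k.+2 - (t+1+1 - 2^-1) * u k.+1) / (t+1+1+2^-1).
    by rewrite -H1 mulrAC divff ?mul1r // posc ?hal // !addr_ge0.
  have e0 : u k = (2 * x * (t+1) * u k.+1 - (t+1 + 2^-1) * u k.+2) / (t+1-2^-1).
    have nz0 : t + 1 - 2^-1 != 0 by rewrite -addrA posc // subr_gt0 invf_lt1 ?ltr1n.
    by apply: (mulIf nz0); rewrite divfK // H0; ring.
  rewrite e1 e0. field.
  apply/and4P; split.
  + apply: (@nz _ (2*k+2)%N); rewrite -!natr1 natrD natrM; ring.
  + apply: (@nz _ (2*k)%N); rewrite -!natr1 natrM; ring.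
  + apply: (@nz _ (2*k+4)%N); rewrite -!natr1 natrD natrM; ring.
  + apply: (@nz _ (2*k+6)%N); rewrite -!natr1 natrD natrM; ring.
- have H1 := H k.+3 isT; have H0 := H k.+2 isT.
  rewrite /rec_at /= in H1 H0 *. rewrite /uhat_b /=.
  rewrite -!(natr1 k.+2) -!(natr1 k.+1) -!(natr1 k) in H1 H0 *.
  set t := k%:R in H1 H0 *.
  have t0 : 0 <= t := ler0n _ _.
  have e1 : u k.+4 = (2 * x * (t+1+1+1) * u k.+3 - (t+1+1+1 - 2^-1) * u k.+2) / (t+1+1+1+2^-1).
    by rewrite -H1 mulrAC divff ?mul1r // posc ?hal // !addr_ge0.
  have e0 : u k.+3 = (2 * x * (t+1+1) * u k.+2 - (t+1+1 - 2^-1) * u k.+1) / (t+1+1+2^-1).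
    by rewrite -H0 mulrAC divff ?mul1r // posc ?hal // !addr_ge0.
  rewrite e1 e0. field.
  apply/and4P; split.
  + apply: (@nz _ (2*k)%N); rewrite -!natr1 natrM; ring.
  + apply: (@nz _ (2*k+2)%N); rewrite -!natr1 natrD natrM; ring.
  + apply: (@nz _ (2*k+4)%N); rewrite -!natr1 natrD natrM; ring.
  + apply: (@nz _ (2*k+6)%N); rewrite -!natr1 natrD natrM; ring.
Qed.
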